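(* Let $\alpha\ge1$ and for $n=0,1,\dots$ let $$z_n(x)=L_{1,1+n}^{II,(\alpha)}(x)\frac{e^{-x/2}}{S(x)}=e^{-x/2}\Bigl(-xL_{n-1}^{(\alpha+2)}(x)+\alpha\Bigl(1+\frac{1}{x+\alpha}\Bigr)L_n^{(\alpha+1)}(x)\Bigr),\qquad x\ge0,$$ where $S(x)=-x-\alpha$, and let $c_n$ be the constant with $c_nz_n(0)=1$. Then $\|c_nz_n\|_{\infty,[0,\infty)}=c_nz_n(0)=1$ for all $n=0,1,\dots$.
   Context: $L_n^{(\beta)}$ is the classical Laguerre polynomial, with $L_{-1}^{(\beta)}\equiv0$. $L_{1,1+n}^{II,(\alpha)}$ is the type II exceptional Laguerre polynomial of codimension $1$, with $S(x)=L_1^{(-\alpha-1)}(x)=-x-\alpha$; the displayed explicit expression is taken as the definition of $z_n$. *)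

(* Defs.v *)
From Stdlib Require Import Reals Lra Arith Factorial.
Open Scope R_scope.

Fixpoint prod_from (k n : nat) (b : R) : R :=
  match n with
  | O => 1
  | S m => if Nat.leb n k then 1 else (b + INR n) * prod_from k m b
  end.

(* Classical (generalized) Laguerre polynomial
   L_n^{(b)}(x) = sum_{k=0}^n (-1)^k binom(n+b, n-k) x^k / k!,
   with binom(n+b, n-k) = prod_{j=k+1}^n (b+j) / (n-k)!. *)
Definition laguerre (n : nat) (b x : R) : R :=
  sum_f_R0 (fun k => (-1) ^ k * (prod_from k n b / INR (fact (n - k)))
                     * x ^ k / INR (fact k)) n.

(* L_{n-1}^{(b)} with the convention L_{-1}^{(b)} = 0 *)
Definition laguerre_pred (n : nat) (b x : R) : R :=
  match n with
  | O => 0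
  | S m => laguerre m b x
  end.

Definition zfun (a : R) (n : nat) (x : R) : R :=
  exp (- x / 2) * (- x * laguerre_pred n (a + 2) x
                   + a * (1 + / (x + a)) * laguerre n (a + 1) x).

(* Main.v *)
Require Import Defs.
From Stdlib Require Import Reals Lra Lia Arith Factorial.
Open Scope R_scope.

Fixpoint u (r : R) (n j : nat) : R :=
  match n with
  | O => r ^ j / INR (fact j)
  | S n' => match j with O => 0 | S j' => u r n' j' end - r * u r n' j
  end.

Lemma u0 r j : u r 0 j = r ^ j / INR (fact j).
Proof. reflexivity. Qed.
Lemma uS0 r n : u r (S n) 0 = - r * u r n 0.
Proof. simpl. ring. Qed.
Lemma uSS r n j : u r (S n) (S j) = u r n j - r * u r n (S j).
Proof. reflexivity. Qed.

Lemma uD r m j : INR (S j) * u r m (S j) - r * u r m j = INR m * u r (pred m) j.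
Proof.
  revert j; induction m as [|m IH]; intro j.
  - rewrite !u0. rewrite fact_simpl, mult_INR. simpl pow.
    replace (INR 0) with 0 by reflexivity.
    field. split; [apply INR_fact_neq_0| apply not_0_INR; lia].
  - destruct j as [|j].
    + rewrite uSS, uS0. simpl pred.
      pose proof (IH 0%nat) as H0.
      replace (INR 1) with 1 by reflexivity.
      destruct m as [|m].
      * simpl pred in H0. replace (INR 0) with 0 in H0 by reflexivity.
        replace (INR 1) with 1 in H0 by reflexivity.
        replace (INR 1) with 1 by reflexivity. nra.
      * pose proof (uS0 r m) as E. simpl pred in H0.
        replace (INR 1) with 1 in H0 by reflexivity. rewrite S_INR.
        rewrite E in H0 |- *.
        assert (u r (S m) 1 = r * (- r * u r m 0) + INR (S m) * u r m 0) as H3 by lra.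
        rewrite H3, S_INR. ring.
    + rewrite !uSS. simpl pred.
      pose proof (IH (S j)) as H1. pose proof (IH j) as H2.
      destruct m as [|m].
      * simpl pred in H1, H2. replace (INR 0) with 0 in H1, H2 by reflexivity.
        rewrite !S_INR in *. replace (INR 1) with 1 by reflexivity.
        set (A := u r 0 (S j)) in *. set (B := u r 0 (S (S j))) in *. set (C := u r 0 j) in *.
        transitivity ((INR j + 1 + 1) * A - r * ((INR j + 1 + 1) * B) - r * C + r * r * A); [ring|].
        replace ((INR j + 1 + 1) * B) with (r * A) by lra.
        replace (r * C) with ((INR j + 1) * A) by lra. change (INR 0) with 0. ring.
      * simpl pred in H1, H2. rewrite uSS. rewrite !S_INR in *.
        set (A := u r (S m) (S j)) in *. set (B := u r (S m) (S (S j))) in *. set (C := u r (S m) j) in *.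
        change (u r m j - r * u r m (S j)) with A.
        transitivity ((INR j + 1 + 1) * A - r * ((INR j + 1 + 1) * B) - r * C + r * r * A); [ring|].
        replace ((INR j + 1 + 1) * B) with (r * A + (INR m + 1) * u r m (S j)) by lra.
        replace (r * C) with ((INR j + 1) * A - (INR m + 1) * u r m j) by lra.
        transitivity (A + (INR m + 1) * (u r m j - r * u r m (S j))); [ring|].
        change (u r m j - r * u r m (S j)) with A. ring.
Qed.

Definition Sb r n m N := sum_f_R0 (fun j => INR (fact j) * u r n j * u r m j) N.

Lemma Srec r n m N :
  Sb r (S n) m N = INR m * Sb r n (pred m) N - INR (fact (S N)) * u r n N * u r m (S N).
Proof.
  unfold Sb. induction N as [|N IH].
  - cbn [sum_f_R0]. rewrite uS0.
    pose proof (uD r m 0) as H. change (fact 1) with 1%nat. change (fact 0) with 1%nat.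
    change (INR 1) with 1 in *.
    transitivity (- r * u r n 0 * u r m 0); [ring|].
    transitivity (u r n 0 * (INR m * u r (pred m) 0) - u r n 0 * (1 * u r m 1)); [|ring].
    rewrite <- H. ring.
  - rewrite !tech5, IH. rewrite uSS.
    pose proof (uD r m (S N)) as H.
    rewrite (fact_simpl (S N)), mult_INR.
    transitivity (INR (fact (S N)) * u r n (S N) * (INR (S (S N)) * u r m (S (S N)) - r * u r m (S N))
       + INR m * sum_f_R0 (fun j : nat => INR (fact j) * u r n j * u r (Init.Nat.pred m) j) N
       - INR (fact (S N)) * u r n N * u r m (S N) * 0
       - INR (S (S N)) * INR (fact (S N)) * u r n (S N) * u r m (S (S N))
       + INR (fact (S N)) * u r n N * u r m (S N)
       - INR (fact (S N)) * u r n N * u r m (S N)); [ring|].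
    rewrite H. ring.
Qed.

Lemma Ssym r n m N : Sb r n m N = Sb r m n N.
Proof. unfold Sb. apply sum_eq. intros; ring. Qed.

Lemma ubound r n j :
  Rabs (u r n j) * INR (fact j) <= (2 + Rabs r)^n * INR (S j) ^ n * (1 + Rabs r)^j.
Proof.
  revert j; induction n as [|n IH]; intro j.
  - rewrite u0. unfold Rdiv. rewrite Rabs_mult, Rabs_inv.
    rewrite (Rabs_right (INR (fact j))) by (apply Rle_ge, pos_INR).
    rewrite Rmult_assoc, Rinv_l by apply INR_fact_neq_0. simpl pow.
    rewrite <- RPow_abs. rewrite !Rmult_1_l, Rmult_1_r. apply pow_incr.
    pose proof (Rabs_pos r); lra.
  - pose proof (Rabs_pos r) as Hr.
    destruct j as [|j].
    + rewrite uS0. change (fact 0) with 1%nat. change (INR 1) with 1.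
      specialize (IH 0%nat). change (fact 0) with 1%nat in IH. change (INR 1) with 1 in IH.
      rewrite pow1 in *. simpl pow. rewrite Rabs_mult, Rabs_Ropp.
      rewrite !Rmult_1_r in *.
      apply Rle_trans with (Rabs r * (2 + Rabs r)^n).
      * apply Rmult_le_compat_l; lra.
      * apply Rmult_le_compat_r. apply pow_le; lra. lra.
    + rewrite uSS. pose proof (IH j) as H1. pose proof (IH (S j)) as H2.
      set (a := INR (S j)) in *.
      assert (Ha : 1 <= a) by (unfold a; rewrite S_INR; pose proof (pos_INR j); lra).
      assert (Hb : INR (S (S j)) = a + 1) by (unfold a; rewrite (S_INR (S j)); reflexivity).
      rewrite Hb in *.
      set (rho := 1 + Rabs r) in *. set (C := (2 + Rabs r)^n) in *.
      assert (HC : 0 <= C) by (apply pow_le; lra).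
      assert (Hp : 0 <= rho ^ j) by (apply pow_le; unfold rho; lra).
      rewrite fact_simpl, mult_INR. fold a.
      apply Rle_trans with ((Rabs (u r n j) + Rabs r * Rabs (u r n (S j))) * (a * INR (fact j))).
      { apply Rmult_le_compat_r. apply Rmult_le_pos; [lra| apply pos_INR].
        unfold Rminus. eapply Rle_trans; [apply Rabs_triang|]. rewrite Rabs_Ropp, Rabs_mult. lra. }
      rewrite fact_simpl, mult_INR in H2. fold a in H2.
      apply Rle_trans with (a * (C * a ^ n * rho ^ j) + Rabs r * (C * (a + 1) ^ n * rho ^ S j)).
      { transitivity (a * (Rabs (u r n j) * INR (fact j)) + Rabs r * (Rabs (u r n (S j)) * (a * INR (fact j)))); [right; ring|].
        apply Rplus_le_compat. apply Rmult_le_compat_l; lra. apply Rmult_le_compat_l; lra. }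
      assert (E1 : a ^ S n <= (a+1) ^ S n) by (apply pow_incr; lra).
      assert (E2 : (a+1) ^ n <= (a+1) ^ S n) by (apply Rle_pow; [lra|lia]).
      assert (E3 : 1 <= rho) by (unfold rho; lra).
      assert (E4 : 0 <= (a+1)^n) by (apply pow_le; lra).
      simpl pow. fold C.
      transitivity (C * rho ^ j * (a ^ S n + Rabs r * rho * (a+1)^n)); [right; simpl pow; ring|].
      transitivity (C * rho ^ j * ((2 + Rabs r) * rho * (a+1)^ S n)); [|right; simpl pow; ring].
      apply Rmult_le_compat_l. apply Rmult_le_pos; lra.
      assert (0 <= a ^ S n) by (apply pow_le; lra).
      assert (a ^ S n <= rho * (a+1)^S n).
      { transitivity ((a+1)^S n). lra. rewrite <- (Rmult_1_l ((a+1)^S n)) at 1.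
        apply Rmult_le_compat_r. apply pow_le; lra. lra. }
      assert (Rabs r * rho * (a+1)^n <= (1 + Rabs r) * rho * (a+1)^S n).
      { apply Rmult_le_compat. apply Rmult_le_pos; lra. lra.
        apply Rmult_le_compat_r; lra. lra. }
      nra.
Qed.

Lemma pow2ge N : INR (S N) <= 2 ^ N.
Proof.
  induction N as [|N IH]. simpl; lra.
  rewrite !S_INR in *. simpl pow. pose proof (pos_INR N). lra.
Qed.

Lemma errbound r n m N :
  Rabs (INR (fact (S N)) * u r n N * u r m (S N)) * INR (fact N) <=
  ((2 + Rabs r)^n * (2 + Rabs r)^m * 2^m * (1 + Rabs r)) *
  (2^n * 2^m * (1 + Rabs r)^2) ^ N.
Proof.
  pose proof (ubound r n N) as H1. pose proof (ubound r m (S N)) as H2.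
  pose proof (Rabs_pos r) as Hr.
  set (rho := 1 + Rabs r) in *.
  assert (HX : 0 <= Rabs (u r n N) * INR (fact N)) by (apply Rmult_le_pos; [apply Rabs_pos|apply pos_INR]).
  assert (HY : 0 <= Rabs (u r m (S N)) * INR (fact (S N))) by (apply Rmult_le_pos; [apply Rabs_pos|apply pos_INR]).
  transitivity ((Rabs (u r n N) * INR (fact N)) * (Rabs (u r m (S N)) * INR (fact (S N)))).
  { right. rewrite !Rabs_mult. rewrite (Rabs_right (INR (fact (S N)))) by (apply Rle_ge, pos_INR). ring. }
  assert (A1 : INR (S N) ^ n <= (2^n)^N).
  { rewrite <- pow_mult, Nat.mul_comm, pow_mult. apply pow_incr. split. apply pos_INR. apply pow2ge. }
  assert (A2 : INR (S (S N)) ^ m <= 2^m * (2^m)^N).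
  { rewrite <- pow_mult, Nat.mul_comm, pow_mult. rewrite <- Rpow_mult_distr. apply pow_incr.
    split. apply pos_INR. rewrite S_INR. pose proof (pow2ge N). 
    assert (1 <= 2^N) by (rewrite <- (pow1 N); apply pow_incr; lra). lra. }
  assert (P1 : 0 <= (2 + Rabs r)^n) by (apply pow_le; lra).
  assert (P2 : 0 <= (2 + Rabs r)^m) by (apply pow_le; lra).
  assert (P3 : 0 <= rho ^ N) by (apply pow_le; unfold rho; lra).
  apply Rle_trans with (((2 + Rabs r)^n * (2^n)^N * rho^N) * ((2 + Rabs r)^m * (2^m * (2^m)^N) * rho ^ S N)).
  { apply Rmult_le_compat; auto.
    - eapply Rle_trans; [apply H1|]. apply Rmult_le_compat_r; auto. apply Rmult_le_compat_l; auto.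
    - eapply Rle_trans; [apply H2|]. apply Rmult_le_compat_r. apply pow_le; unfold rho; lra.
      apply Rmult_le_compat_l; auto. }
  right. rewrite !Rpow_mult_distr. simpl pow. rewrite <- !pow_mult.
  rewrite Rmult_1_r, Rpow_mult_distr. ring.
Qed.

Lemma squeeze0 (E b : nat -> R) : (forall N, Rabs (E N) <= b N) -> Un_cv b 0 -> Un_cv E 0.
Proof.
  intros H Hb eps He. destruct (Hb eps He) as [N0 HN]. exists N0. intros N HN0.
  specialize (HN N HN0). unfold Rdist in *. rewrite Rminus_0_r in *.
  specialize (H N). pose proof (Rabs_pos (E N)). 
  apply Rle_lt_trans with (b N); [lra|]. apply Rle_lt_trans with (Rabs (b N)). apply Rle_abs. auto.
Qed.

Lemma err0 r n m : Un_cv (fun N => INR (fact (S N)) * u r n N * u r m (S N)) 0.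
Proof.
  set (K := (2 + Rabs r)^n * (2 + Rabs r)^m * 2^m * (1 + Rabs r)).
  set (t := 2^n * 2^m * (1 + Rabs r)^2).
  apply squeeze0 with (b := fun N => K * (t ^ N / INR (fact N))).
  - intro N. pose proof (errbound r n m N) as H. fold K t in H.
    assert (0 < INR (fact N)) by (apply lt_0_INR, lt_O_fact).
    unfold Rdiv. rewrite <- Rmult_assoc. apply (Rmult_le_reg_r (INR (fact N))); auto.
    replace (K * t ^ N * / INR (fact N) * INR (fact N)) with (K * t^N) by (field; lra). exact H.
  - replace 0 with (K * 0) by ring.
    apply (CV_mult (fun _ => K)). intros e He; exists 0%nat; intros; unfold Rdist; rewrite Rminus_diag, Rabs_R0; lra.
    apply cv_speed_pow_fact.
Qed.

Lemma Un_cv_ext (a b : nat -> R) l : (forall N, a N = b N) -> Un_cv a l -> Un_cv b l.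
Proof. intros H Ha e He. destruct (Ha e He) as [N0 HN]. exists N0. intros N HN0. rewrite <- H. auto. Qed.

Lemma exp_cv x : Un_cv (fun N => sum_f_R0 (fun j => / INR (fact j) * x ^ j) N) (exp x).
Proof. unfold exp. destruct (exist_exp x) as [l Hl]. simpl. exact Hl. Qed.

Definition T r n m := if Nat.eqb n m then INR (fact n) * exp (r*r) else 0.

Lemma Slim r n m : Un_cv (fun N => Sb r n m N) (T r n m).
Proof.
  revert m; induction n as [|n IH]; intro m.
  - destruct m as [|m].
    + unfold T. simpl Nat.eqb. change (fact 0) with 1%nat. change (INR 1) with 1. rewrite Rmult_1_l.
      apply Un_cv_ext with (a := fun N => sum_f_R0 (fun j => / INR (fact j) * (r*r) ^ j) N); [|apply exp_cv].
      intro N. unfold Sb. apply sum_eq. intros i _. rewrite !u0.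
      rewrite Rpow_mult_distr. field. apply INR_fact_neq_0.
    + unfold T. simpl Nat.eqb.
      apply Un_cv_ext with (a := fun N => - (INR (fact (S N)) * u r m N * u r 0 (S N))).
      * intro N. rewrite Ssym, Srec. change (INR 0) with 0. ring.
      * replace 0 with (-0) by ring. apply (CV_opp (fun N => INR (fact (S N)) * u r m N * u r 0 (S N))).
        apply err0.
  - apply Un_cv_ext with (a := fun N => INR m * Sb r n (pred m) N - INR (fact (S N)) * u r n N * u r m (S N)).
    + intro N. rewrite Srec. reflexivity.
    + replace (T r (S n) m) with (INR m * T r n (pred m) - 0).
      * apply CV_minus; [|apply err0]. apply (CV_mult (fun _ => INR m)); [|apply IH].
        intros e He; exists 0%nat; intros; unfold Rdist; rewrite Rminus_diag, Rabs_R0; lra.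
      * unfold T. destruct m as [|m].
        -- simpl. ring.
        -- simpl pred. simpl Nat.eqb. destruct (Nat.eqb n m) eqn:E.
           ++ apply Nat.eqb_eq in E. subst. rewrite fact_simpl, mult_INR. ring.
           ++ ring.
Qed.

Lemma sum_ge_term (f : nat -> R) k N : (forall i, 0 <= f i) -> (k <= N)%nat -> f k <= sum_f_R0 f N.
Proof.
  intros Hf Hk. induction N as [|N IH].
  - assert (k = 0%nat) by lia. subst. simpl. lra.
  - destruct (Nat.eq_dec k (S N)) as [->|Hne].
    + rewrite tech5. pose proof (cond_pos_sum f N (fun i => Hf i)). lra.
    + rewrite tech5. pose proof (IH ltac:(lia)). pose proof (Hf (S N)). lra.
Qed.

Lemma lim_ge (U : nat -> R) l a n : (forall N, (n <= N)%nat -> a <= U N) -> Un_cv U l -> a <= l.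
Proof.
  intros H HU. destruct (Rle_or_lt a l) as [|Hlt]; auto.
  destruct (HU (a - l)) as [N0 HN]; [lra|].
  specialize (HN (max N0 n) ltac:(lia)). specialize (H (max N0 n) ltac:(lia)).
  unfold Rdist in HN. pose proof (Rle_abs (U (max N0 n) - l)). lra.
Qed.

Lemma barg r n : u r n n ^ 2 <= exp (r * r).
Proof.
  assert (Hf : 0 < INR (fact n)) by (apply lt_0_INR, lt_O_fact).
  assert (H : INR (fact n) * (u r n n)^2 <= T r n n).
  { apply lim_ge with (U := fun N => Sb r n n N) (n := n); [|apply Slim].
    intros N HN. unfold Sb. replace (INR (fact n) * u r n n ^ 2) with (INR (fact n) * u r n n * u r n n) by ring.
    apply (sum_ge_term (fun j => INR (fact j) * u r n j * u r n j)); auto.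
    intro i. rewrite Rmult_assoc. apply Rmult_le_pos. apply pos_INR. nra. }
  unfold T in H. rewrite Nat.eqb_refl in H.
  apply (Rmult_le_reg_l (INR (fact n))); auto.
Qed.

Fixpoint binom (n k : nat) : R :=
  match n, k with
  | _, O => 1
  | O, S _ => 0
  | S n', S k' => binom n' k' + binom n' (S k')
  end.

Lemma binom_over n k : (n < k)%nat -> binom n k = 0.
Proof.
  revert k; induction n as [|n IH]; intros k Hk; destruct k as [|k]; try lia.
  - reflexivity.
  - simpl. rewrite !IH by lia. ring.
Qed.

Lemma sum_shift (f : nat -> R) n : sum_f_R0 f (S n) = f 0%nat + sum_f_R0 (fun i => f (S i)) n.
Proof.
  induction n as [|n IH]. simpl; ring.
  rewrite tech5, IH, tech5. ring.
Qed.

Lemma sum_zero n : sum_f_R0 (fun _ => 0) n = 0.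
Proof. induction n as [|n IH]; simpl; [|rewrite IH]; ring. Qed.

Lemma binom_split n (a : nat -> R) :
  sum_f_R0 (fun i => binom (S n) i * a i) (S n) =
  sum_f_R0 (fun i => binom n i * a i) n + sum_f_R0 (fun i => binom n i * a (S i)) n.
Proof.
  rewrite sum_shift. simpl binom.
  rewrite (sum_eq _ (fun i => binom n i * a (S i) + binom n (S i) * a (S i))) by (intros; ring).
  rewrite plus_sum.
  assert (H : sum_f_R0 (fun i => binom n i * a i) n = sum_f_R0 (fun i => binom n i * a i) (S n)).
  { rewrite tech5, binom_over by lia. ring. }
  rewrite H, sum_shift. simpl binom. replace (binom n 0) with 1 by (destruct n; reflexivity). ring.
Qed.

Definition g (r : R) (j k : nat) : R := if (k <=? j)%nat then r ^ (j - k) / INR (fact (j - k)) else 0.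
Definition F (r : R) (n j : nat) : R := sum_f_R0 (fun i => binom n i * ((- r) ^ i * g r j (n - i))) n.

Lemma u_F r n j : u r n j = F r n j.
Proof.
  revert j; induction n as [|n IH]; intro j.
  - unfold F, g. simpl. rewrite Nat.sub_0_r. ring.
  - unfold F. rewrite binom_split.
    rewrite (sum_eq (fun i => binom n i * ((- r) ^ S i * g r j (S n - S i)))
                    (fun i => (binom n i * ((- r) ^ i * g r j (n - i))) * (- r))) by (intros; simpl pow; replace (S n - S i)%nat with (n - i)%nat by lia; ring).
    rewrite <- scal_sum. fold (F r n j). rewrite <- IH.
    destruct j as [|j].
    + rewrite uS0. rewrite (sum_eq _ (fun _ => 0)). rewrite sum_zero. ring.
      intros i Hi. unfold g. replace (S n - i)%nat with (S (n - i)) by lia. simpl. ring.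
    + rewrite uSS. rewrite IH. unfold F.
      rewrite (sum_eq (fun i => binom n i * ((- r) ^ i * g r (S j) (S n - i)))
                      (fun i => binom n i * ((- r) ^ i * g r j (n - i)))). ring.
      intros i Hi. unfold g. replace (S n - i)%nat with (S (n - i)) by lia. reflexivity.
Qed.

Lemma u_diag r n : u r n n = sum_f_R0 (fun i => binom n i * (-1) ^ i * (r * r) ^ i / INR (fact i)) n.
Proof.
  rewrite u_F. unfold F. apply sum_eq. intros i Hi. unfold g.
  replace (n - i <=? n)%nat with true by (symmetry; apply Nat.leb_le; lia).
  replace (n - (n - i))%nat with i by lia.
  replace (- r) with (-1 * r) by ring. rewrite !Rpow_mult_distr. field. apply INR_fact_neq_0.
Qed.

Fixpoint E (N : nat) (c : R) : R :=
  match N with O => 1 | S N' => E N' c * (c + INR N') / INR (S N') end.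

Lemma E_def N c : E (S N) c = E N c * (c + INR N) / INR (S N).
Proof. reflexivity. Qed.

Lemma E_S N c : INR (S N) * E (S N) c = E N c * (c + INR N).
Proof. rewrite E_def. field. apply not_0_INR; lia. Qed.

Lemma E_1 N : E N 1 = 1.
Proof. induction N as [|N IH]; [reflexivity|]. rewrite E_def, IH, S_INR. field. pose proof (pos_INR N); lra. Qed.

Lemma E_nonneg N c : 0 <= c -> 0 <= E N c.
Proof.
  intro Hc. induction N as [|N IH]; [simpl; lra|]. rewrite E_def.
  unfold Rdiv. apply Rmult_le_pos. apply Rmult_le_pos; auto. pose proof (pos_INR N); lra.
  left; apply Rinv_0_lt_compat, lt_0_INR; lia.
Qed.

Lemma Eshift N c : INR (S N) * E (S N) c = c * E N (c + 1).
Proof.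
  induction N as [|N IH].
  - simpl. field.
  - rewrite E_S. rewrite (E_def N (c+1)).
    replace (E (S N) c) with (c * E N (c + 1) / INR (S N)).
    + rewrite S_INR. field. pose proof (pos_INR N); lra.
    + rewrite <- IH. field. apply not_0_INR; lia.
Qed.

Lemma Epascal N c : E (S N) (c + 1) = E (S N) c + E N (c + 1).
Proof.
  induction N as [|N IH].
  - simpl. field.
  - pose proof (Eshift N c) as Hs.
    assert (HN : INR (S (S N)) <> 0) by (apply not_0_INR; lia).
    assert (HN1 : INR (S N) <> 0) by (apply not_0_INR; lia).
    apply (Rmult_eq_reg_l (INR (S (S N)))); auto.
    rewrite Rmult_plus_distr_l, !E_S. rewrite IH.
    rewrite (S_INR (S N)) in *. rewrite (S_INR N) in *.
    assert (E (S N) c = c * E N (c + 1) / (INR N + 1)) as HH by (rewrite <- Hs; field; lra).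
    rewrite HH. field. lra.
Qed.

Lemma binom_E n k : (k <= n)%nat -> binom n k = E (n - k) (INR k + 1).
Proof.
  revert k; induction n as [|n IH]; intros k Hk.
  - assert (k = 0%nat) by lia. subst. reflexivity.
  - destruct k as [|k].
    + simpl binom. simpl (INR 0). rewrite Rplus_0_l, E_1. reflexivity.
    + simpl binom. destruct (Nat.eq_dec k n) as [->|Hne].
      * rewrite (binom_over n (S n)) by lia. rewrite IH by lia. rewrite !Nat.sub_diag. simpl. ring.
      * rewrite !IH by lia. replace (S n - S k)%nat with (S (n - S k)) by lia.
        replace (n - k)%nat with (S (n - S k)) by lia.
        rewrite (S_INR k). rewrite (Epascal (n - S k) (INR k + 1)). ring.
Qed.

Definition lcoef (n : nat) (b : R) (k : nat) : R :=
  if (k <=? n)%nat then (-1) ^ k * E (n - k) (b + INR k + 1) / INR (fact k) else 0.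

Definition LL (n : nat) (b x : R) : R := sum_f_R0 (fun k => lcoef n b k * x ^ k) n.

Lemma prod_from_S k m b : prod_from k (S m) b = if Nat.leb (S m) k then 1 else (b + INR (S m)) * prod_from k m b.
Proof. reflexivity. Qed.

Lemma prod_from_E b N k : prod_from k (k + N) b = E N (b + INR k + 1) * INR (fact N).
Proof.
  induction N as [|N IH].
  - rewrite Nat.add_0_r. destruct k; simpl; [ring|]. rewrite Nat.leb_refl. ring.
  - replace (k + S N)%nat with (S (k + N)) by lia. rewrite prod_from_S.
    replace (Nat.leb (S (k + N)) k) with false by (symmetry; apply Nat.leb_gt; lia).
    rewrite IH. rewrite fact_simpl, mult_INR. rewrite E_def.
    replace (INR (S (k + N))) with (INR k + INR N + 1) by (rewrite S_INR, plus_INR; ring).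
    field. apply not_0_INR; lia.
Qed.

Lemma laguerre_LL n b x : laguerre n b x = LL n b x.
Proof.
  unfold laguerre, LL. apply sum_eq. intros k Hk. unfold lcoef.
  replace (k <=? n)%nat with true by (symmetry; apply Nat.leb_le; lia).
  replace n with (k + (n - k))%nat at 1 by lia. rewrite prod_from_E.
  field. split; apply INR_fact_neq_0.
Qed.

Lemma LL_ext n b x M : (n <= M)%nat -> LL n b x = sum_f_R0 (fun k => lcoef n b k * x ^ k) M.
Proof.
  intro H. induction H as [|M HM IH]. reflexivity.
  rewrite tech5, <- IH. unfold lcoef.
  replace (S M <=? n)%nat with false by (symmetry; apply Nat.leb_gt; lia). ring.
Qed.

Lemma sum_trunc (f : nat -> R) m n : (m <= n)%nat -> (forall i, (m < i <= n)%nat -> f i = 0) ->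
  sum_f_R0 f n = sum_f_R0 f m.
Proof.
  intros H. induction H as [|n Hn IH]; intro Hz. reflexivity.
  rewrite tech5, IH. rewrite (Hz (S n)) by lia. ring. intros; apply Hz; lia.
Qed.

Lemma sum_swap (f : nat -> nat -> R) N M :
  sum_f_R0 (fun i => sum_f_R0 (fun j => f i j) M) N = sum_f_R0 (fun j => sum_f_R0 (fun i => f i j) N) M.
Proof.
  induction N as [|N IH]. simpl. reflexivity.
  rewrite tech5, IH. rewrite <- plus_sum. apply sum_eq. intros. rewrite tech5. reflexivity.
Qed.

Lemma vandermonde c d N : sum_f_R0 (fun j => E j c * E (N - j) d) N = E N (c + d).
Proof.
  induction N as [|N IH].
  - simpl. ring.
  - assert (HN : INR (S N) <> 0) by (apply not_0_INR; lia).
    apply (Rmult_eq_reg_l (INR (S N))); auto. rewrite E_S, <- IH.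
    rewrite scal_sum.
    rewrite (sum_eq (fun i => E i c * E (S N - i) d * INR (S N))
                    (fun i => INR i * E i c * E (S N - i) d + INR (S N - i) * E i c * E (S N - i) d))
      by (intros i Hi; rewrite minus_INR by lia; ring).
    rewrite plus_sum. rewrite sum_shift, tech5. rewrite Nat.sub_diag.
    rewrite (sum_eq (fun i => INR (S i) * E (S i) c * E (S N - S i) d)
                    (fun i => (c + INR i) * E i c * E (N - i) d))
      by (intros i Hi; rewrite E_S; replace (S N - S i)%nat with (N - i)%nat by lia; ring).
    rewrite (sum_eq (fun i => INR (S N - i) * E i c * E (S N - i) d)
                    (fun i => (d + INR (N - i)) * E i c * E (N - i) d))
      by (intros i Hi; replace (S N - i)%nat with (S (N - i)) by lia; transitivity (E i c * (INR (S (N - i)) * E (S (N - i)) d)); [ring|]; rewrite E_S; ring).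
    change (INR 0) with 0. rewrite <- Rplus_assoc. rewrite Rmult_0_l, !Rmult_0_l, Rplus_0_l, Rplus_0_r.
    rewrite <- plus_sum. rewrite Rmult_comm, scal_sum. apply sum_eq. intros i Hi.
    rewrite minus_INR by lia. ring.
Qed.

Lemma I1 n c x : LL n c x = sum_f_R0 (fun j => E j c * LL (n - j) 0 x) n.
Proof.
  rewrite (sum_eq _ (fun j => sum_f_R0 (fun k => lcoef (n - j) 0 k * x ^ k * E j c) n)).
  2:{ intros j Hj. rewrite (LL_ext (n - j) 0 x n) by lia. rewrite scal_sum. reflexivity. }
  rewrite sum_swap. unfold LL. apply sum_eq. intros k Hk.
  rewrite (sum_eq _ (fun j => (E j c * lcoef (n - j) 0 k) * x ^ k)) by (intros; ring).
  rewrite <- scal_sum, Rmult_comm. f_equal.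
  rewrite (sum_trunc _ (n - k) n) by (lia || (intros i Hi; unfold lcoef;
     replace (k <=? n - i)%nat with false by (symmetry; apply Nat.leb_gt; lia); ring)).
  rewrite (sum_eq _ (fun j => (E j c * E (n - k - j) (INR k + 1)) * ((-1) ^ k / INR (fact k)))).
  2:{ intros j Hj. unfold lcoef. replace (k <=? n - j)%nat with true by (symmetry; apply Nat.leb_le; lia).
      replace (n - j - k)%nat with (n - k - j)%nat by lia. rewrite Rplus_0_l. field. apply INR_fact_neq_0. }
  rewrite <- scal_sum. rewrite vandermonde. unfold lcoef.
  replace (k <=? n)%nat with true by (symmetry; apply Nat.leb_le; lia).
  replace (c + (INR k + 1)) with (c + INR k + 1) by ring. field. apply INR_fact_neq_0.
Qed.

Lemma I2 m a x :
  x * LL m (a + 2) x = (INR m + a + 2) * LL m (a + 1) x - INR (S m) * LL (S m) (a + 1) x.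
Proof.
  rewrite (LL_ext m (a+1) x (S m)) by lia. unfold LL.
  rewrite !scal_sum, <- minus_sum, sum_shift.
  assert (H0 : lcoef m (a + 1) 0 * x ^ 0 * (INR m + a + 2) - lcoef (S m) (a + 1) 0 * x ^ 0 * INR (S m) = 0).
  { unfold lcoef. simpl Nat.leb. cbv iota. rewrite !Nat.sub_0_r. rewrite E_def.
    simpl (INR 0). change (fact 0) with 1%nat. simpl (INR 1). rewrite S_INR. field.
    pose proof (pos_INR m); lra. }
  rewrite H0, Rplus_0_l. apply sum_eq. intros k Hk.
  transitivity (x ^ S k * lcoef m (a + 2) k); [simpl pow; ring|].
  transitivity (x ^ S k * ((INR m + a + 2) * lcoef m (a + 1) (S k) - INR (S m) * lcoef (S m) (a + 1) (S k))); [|ring].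
  f_equal. unfold lcoef.
  replace (k <=? m)%nat with true by (symmetry; apply Nat.leb_le; lia).
  replace (S k <=? S m)%nat with true by (symmetry; apply Nat.leb_le; lia).
  replace (S m - S k)%nat with (m - k)%nat by lia.
  rewrite !S_INR. rewrite !fact_simpl, !mult_INR. rewrite !S_INR.
  assert (Hf : INR (fact k) <> 0) by apply INR_fact_neq_0.
  assert (Hk1 : INR k + 1 <> 0) by (pose proof (pos_INR k); lra).
  destruct (Nat.eq_dec k m) as [->|Hne].
  - replace (S m <=? m)%nat with false by (symmetry; apply Nat.leb_gt; lia).
    rewrite Nat.sub_diag. simpl E. simpl pow. field. auto.
  - replace (S k <=? m)%nat with true by (symmetry; apply Nat.leb_le; lia).
    destruct (m - k)%nat as [|M] eqn:EM; [lia|].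
    replace (m - S k)%nat with M by lia.
    assert (Hm : INR m = INR k + INR M + 1) by (replace m with (k + S M)%nat by lia; rewrite plus_INR, S_INR; ring).
    replace (a + 1 + (INR k + 1) + 1) with (a + 2 + INR k + 1) by ring.
    rewrite E_def. rewrite S_INR. simpl pow.
    assert (HM : INR M + 1 <> 0) by (pose proof (pos_INR M); lra).
    rewrite Hm. field. auto.
Qed.

Lemma sum_at0 (f : nat -> R) n : sum_f_R0 (fun k => f k * 0 ^ k) n = f 0%nat.
Proof.
  induction n as [|n IH]. simpl; ring.
  rewrite tech5, IH. simpl pow. ring.
Qed.

Lemma LL_at0 n b : LL n b 0 = E n (b + 1).
Proof.
  unfold LL. rewrite sum_at0. unfold lcoef. simpl Nat.leb. rewrite Nat.sub_0_r.
  simpl. rewrite Rplus_0_r. field.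
Qed.

Lemma ell0 m : LL m 0 0 = 1.
Proof. rewrite LL_at0, Rplus_0_l. apply E_1. Qed.

Lemma ell_bound m x : 0 <= x -> Rabs (LL m 0 x) <= exp (x / 2).
Proof.
  intro Hx. set (r := sqrt x).
  assert (Hr : r * r = x) by (apply sqrt_sqrt; auto).
  assert (Heq : u r m m = LL m 0 x).
  { rewrite u_diag. unfold LL. apply sum_eq. intros i Hi. unfold lcoef.
    replace (i <=? m)%nat with true by (symmetry; apply Nat.leb_le; lia).
    rewrite binom_E by lia. rewrite Hr, Rplus_0_l. field. apply INR_fact_neq_0. }
  pose proof (barg r m) as H. rewrite Heq, Hr in H.
  assert (He : exp x = exp (x/2) * exp (x/2)) by (rewrite <- exp_plus; f_equal; field).
  pose proof (exp_pos (x/2)).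
  destruct (Rle_or_lt (Rabs (LL m 0 x)) (exp (x/2))) as [|Hlt]; auto.
  exfalso. assert (LL m 0 x ^ 2 = Rabs (LL m 0 x) * Rabs (LL m 0 x)).
  { rewrite <- Rabs_mult. simpl. rewrite Rmult_1_r. symmetry. apply Rabs_right.
    apply Rle_ge, Rle_0_sqr. }
  nra.
Qed.

Definition shE (a : R) (j : nat) : R := match j with O => 0 | S j' => E j' (a + 1) end.
Definition w (a : R) (n j : nat) : R := (INR n + a) * E j (a + 1) - (INR n + a + 1) * shE a j.

Lemma Q_decomp a n x :
  - x * laguerre_pred n (a + 2) x + a * laguerre n (a + 1) x =
  sum_f_R0 (fun j => w a n j * LL (n - j) 0 x) n.
Proof.
  rewrite laguerre_LL. destruct n as [|m].
  - unfold laguerre_pred, w, shE, LL, lcoef. simpl. field.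
  - unfold laguerre_pred. rewrite laguerre_LL.
    replace (- x * LL m (a + 2) x) with (- (x * LL m (a + 2) x)) by ring. rewrite I2.
    rewrite (I1 (S m) (a+1) x), (I1 m (a+1) x).
    assert (Hs : sum_f_R0 (fun j => E j (a + 1) * LL (m - j) 0 x) m =
                 sum_f_R0 (fun j => shE a j * LL (S m - j) 0 x) (S m)).
    { rewrite sum_shift. simpl shE. rewrite Rmult_0_l, Rplus_0_l. apply sum_eq. intros. reflexivity. }
    rewrite Hs. unfold w. rewrite !scal_sum, <- minus_sum.
    match goal with |- - ?A + ?B = _ => replace (- A + B) with (B - A) by ring end.
    rewrite <- minus_sum. apply sum_eq. intros j Hj. rewrite !S_INR. ring.
Qed.

Lemma w_nonneg a n j : 1 <= a -> (j <= n)%nat -> 0 <= w a n j.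
Proof.
  intros Ha Hj. pose proof (pos_INR n). unfold w, shE. destruct j as [|i].
  - simpl. lra.
  - assert (Hi : INR i + 1 <= INR n) by (rewrite <- S_INR; apply le_INR; auto).
    pose proof (pos_INR i).
    assert (HE : 0 <= E i (a + 1)) by (apply E_nonneg; lra).
    rewrite E_def, S_INR.
    replace ((INR n + a) * (E i (a + 1) * (a + 1 + INR i) / (INR i + 1)) - (INR n + a + 1) * E i (a + 1))
      with (E i (a + 1) * ((a * (INR n + a) - (INR i + 1)) / (INR i + 1))) by (field; lra).
    apply Rmult_le_pos; auto. unfold Rdiv. apply Rmult_le_pos.
    nra. left. apply Rinv_0_lt_compat. lra.
Qed.

Lemma comb_bound n (v : nat -> R) x : 0 <= x -> (forall j, (j <= n)%nat -> 0 <= v j) ->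
  exp (- x / 2) * Rabs (sum_f_R0 (fun j => v j * LL (n - j) 0 x) n) <= sum_f_R0 v n.
Proof.
  intros Hx Hv.
  assert (He : exp (- x / 2) * exp (x / 2) = 1) by (rewrite <- exp_plus; replace (- x / 2 + x / 2) with 0 by field; apply exp_0).
  pose proof (exp_pos (- x / 2)).
  apply Rle_trans with (exp (- x / 2) * (sum_f_R0 v n * exp (x / 2))).
  - apply Rmult_le_compat_l; [lra|].
    eapply Rle_trans; [apply sum_f_R0_triangle|]. rewrite (Rmult_comm (sum_f_R0 v n)), scal_sum.
    apply sum_Rle. intros j Hj. rewrite Rabs_mult. rewrite (Rabs_right (v j)) by (apply Rle_ge; auto).
    apply Rmult_le_compat_l; auto. apply ell_bound; auto.
  - right. transitivity (sum_f_R0 v n * (exp (- x / 2) * exp (x / 2))); [ring|]. rewrite He. ring.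
Qed.

Lemma sum_ell0 n (v : nat -> R) : sum_f_R0 (fun j => v j * LL (n - j) 0 0) n = sum_f_R0 v n.
Proof. apply sum_eq. intros. rewrite ell0. ring. Qed.

Lemma sum_nonneg (v : nat -> R) n : (forall j, (j <= n)%nat -> 0 <= v j) -> 0 <= sum_f_R0 v n.
Proof.
  intro H. induction n as [|n IH]. simpl. apply H; lia.
  rewrite tech5. pose proof (H (S n) (le_n _)). pose proof (IH (fun j Hj => H j ltac:(lia))). lra.
Qed.

Theorem lemma4 (alpha : R) (n : nat) (c : R) :
  1 <= alpha ->
  c * zfun alpha n 0 = 1 ->
  is_lub (fun y => exists x, 0 <= x /\ y = Rabs (c * zfun alpha n x)) 1.
Proof.
  intros Ha Hc.
  set (SW := sum_f_R0 (w alpha n) n).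
  set (SE := sum_f_R0 (fun j => E j (alpha + 1)) n).
  assert (HW : forall j, (j <= n)%nat -> 0 <= w alpha n j) by (intros; apply w_nonneg; auto).
  assert (HEn : forall j, (j <= n)%nat -> 0 <= E j (alpha + 1)) by (intros; apply E_nonneg; lra).
  assert (Hz : forall x, 0 <= x -> zfun alpha n x =
     exp (- x / 2) * (sum_f_R0 (fun j => w alpha n j * LL (n - j) 0 x) n
        + alpha / (x + alpha) * sum_f_R0 (fun j => E j (alpha + 1) * LL (n - j) 0 x) n)).
  { intros x Hx. rewrite <- Q_decomp, <- I1, <- laguerre_LL. unfold zfun. field. lra. }
  assert (Hz0 : zfun alpha n 0 = SW + SE).
  { rewrite Hz by lra. rewrite !sum_ell0. replace (- 0 / 2) with 0 by field. rewrite exp_0.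
    fold SW SE. replace (alpha / (0 + alpha)) with 1 by (field; lra). ring. }
  assert (HSW : 0 <= SW) by (apply sum_nonneg; auto).
  assert (HSE : 0 <= SE) by (apply sum_nonneg; auto).
  assert (Hbound : forall x, 0 <= x -> Rabs (zfun alpha n x) <= zfun alpha n 0).
  { intros x Hx. rewrite Hz0, Hz by auto.
    pose proof (comb_bound n (w alpha n) x Hx HW) as B1.
    pose proof (comb_bound n (fun j => E j (alpha + 1)) x Hx HEn) as B2.
    fold SW in B1. fold SE in B2.
    assert (Hq : 0 <= alpha / (x + alpha) <= 1).
    { split. unfold Rdiv. apply Rmult_le_pos. lra. left; apply Rinv_0_lt_compat; lra.
      apply (Rmult_le_reg_r (x + alpha)). lra. unfold Rdiv. rewrite Rmult_assoc, Rinv_l by lra. lra. }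
    pose proof (exp_pos (- x / 2)).
    rewrite Rabs_mult, (Rabs_right (exp _)) by lra.
    eapply Rle_trans. apply Rmult_le_compat_l. lra. apply Rabs_triang.
    rewrite Rabs_mult, (Rabs_right (alpha / (x + alpha))) by lra.
    set (A1 := Rabs (sum_f_R0 (fun j => w alpha n j * LL (n - j) 0 x) n)) in *.
    set (A2 := Rabs (sum_f_R0 (fun j => E j (alpha + 1) * LL (n - j) 0 x) n)) in *.
    assert (0 <= A2) by apply Rabs_pos.
    assert (exp (- x / 2) * (alpha / (x + alpha) * A2) <= exp (- x / 2) * A2).
    { apply Rmult_le_compat_l. lra. rewrite <- (Rmult_1_l A2) at 2. apply Rmult_le_compat_r; lra. }
    nra. }
  assert (Hpos : 0 < zfun alpha n 0).
  { rewrite Hz0. destruct (Req_dec (SW + SE) 0) as [H0|H0].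
    - rewrite Hz0, H0 in Hc. lra.
    - lra. }
  assert (Hcpos : 0 < c).
  { destruct (Rle_or_lt c 0) as [Hc0|]; auto. nra. }
  split.
  - intros y [x [Hx ->]]. rewrite Rabs_mult, (Rabs_right c) by lra.
    rewrite <- Hc. apply Rmult_le_compat_l; [lra|]. apply Hbound; auto.
  - intros b Hb. apply Hb. exists 0. split; [lra|]. rewrite Hc, Rabs_R1. reflexivity.
Qed.
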